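(* Let $\rho$ be a state of a $d$-dimensional system ($d<\infty$), let $A,B$ be two copies with $\rho_A=\rho_B=\rho$, and let $j$ be an integer with $1\le j\le d-1$. For each $c$, let $d^{(j,c)}:=\dim\mathcal{V}^{(j,c)}_{\rm in}$ where $\mathcal{V}^{(j,c)}_{\rm in}:=\mathrm{span}\{|n+j,m\rangle\langle n,m|: n+m=c\}$ (over $n,n+j,m\in\{0,\dots,d-1\}$). Then $$\Delta M_A^{(j)}\le\sum_{c=0}^{2d-2-j}\big\|\Pi_{c+j}(\rho\otimes\rho)^{(j)}\Pi_c\big\|_{d^{(j,c)}\text{-KF}}-\|\rho^{(j)}\|_1.$$
   Context: Local observable $L=\sum_{n=0}^{d-1}n|n\rangle\langle n|$, $L_{AB}=L\otimes\mathbb{I}+\mathbb{I}\otimes L=\sum_{c=0}^{2d-2}c\,\Pi_c$, where $\Pi_c$ is the projector onto the eigenvalue-$c$ eigenspace of $L_{AB}$. Single-system mode: $\rho^{(j)}:=\sum_n|n+j\rangle\langle n+j|\rho|n\rangle\langle n|$ (out-of-range terms omitted); bipartite mode: $X^{(j)}:=\sum_c\Pi_{c+j}X\Pi_c$. $M^{(j)}(\sigma):=\|\sigma^{(j)}\|_1$. $\Delta M_A^{(j)}:=\max_{V_{AB}}M^{(j)}(\sigma_A)-M^{(j)}(\rho)$, $\sigma_A=\mathrm{tr}_B[V_{AB}(\rho\otimes\rho)V_{AB}^\dagger]$, maximum over unitaries with $[V_{AB},L_{AB}]=0$. $\|P\|_{\alpha\text{-KF}}$ is the sum of the $\alpha$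 largest singular values of $P$. *)

(* Defs.v *)
(* Complex scalars: an arbitrary numClosedFieldType C
   (e.g. R[i] for a real closed field R, or algC). *)
From HB Require Import structures.
From mathcomp Require Import all_boot all_order all_algebra.
Set Implicit Arguments. Unset Strict Implicit. Unset Printing Implicit Defensive.
Import Order.TTheory GRing.Theory Num.Theory.
Local Open Scope ring_scope.

Section Defs.
Variable C : numClosedFieldType.

Definition adj m n (A : 'M[C]_(m, n)) : 'M[C]_(n, m) := (map_mx (fun z => z^*) A)^T.

Definition psd n (A : 'M[C]_n) : Prop :=
  forall v : 'cV[C]_n, 0 <= (adj v *m A *m v) 0 0.

Definition density n (A : 'M[C]_n) : Prop := psd A /\ \tr A = 1.

Definition unitary n (U : 'M[C]_n) : Prop := U *m adj U = 1%:M.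

(* eigenvalues (with multiplicity) = roots of the characteristic polynomial *)
Definition eigvals n (A : 'M[C]_n) : seq C :=
  sval (closed_field_poly_normal (char_poly A)).

Definition singvals m n (A : 'M[C]_(m, n)) : seq C :=
  map (fun z : C => sqrtC z) (eigvals (adj A *m A)).

Definition trnorm m n (A : 'M[C]_(m, n)) : C := \sum_(s <- singvals A) s.

Definition kyfan (alpha : nat) m n (A : 'M[C]_(m, n)) : C :=
  \sum_(s <- take alpha (sort (fun x y => y <= x) (singvals A))) s.

Variable d : nat.
Definition D2 := #|{: 'I_d * 'I_d}|.
Definition pr (k : 'I_D2) : 'I_d * 'I_d := enum_val k.
Definition ix (ab : 'I_d * 'I_d) : 'I_D2 := enum_rank ab.

(* eigenvalue of L_AB = L (x) 1 + 1 (x) L on |a,b> *)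
Definition Lval (ab : 'I_d * 'I_d) : nat := ab.1 + ab.2.

Definition LAB : 'M[C]_D2 := \matrix_(k, l) ((k == l)%:R * (Lval (pr k))%:R).

Definition Pi (c : nat) : 'M[C]_D2 :=
  \matrix_(k, l) ((k == l) && (Lval (pr k) == c))%:R.

Definition tens (A B : 'M[C]_d) : 'M[C]_D2 :=
  \matrix_(k, l) (A (pr k).1 (pr l).1 * B (pr k).2 (pr l).2).

Definition ptraceB (X : 'M[C]_D2) : 'M[C]_d :=
  \matrix_(i, i') \sum_(b : 'I_d) X (ix (i, b)) (ix (i', b)).

(* single-system mode  rho^(j) = sum_n |n+j><n+j| rho |n><n| *)
Definition mode1 (j : nat) (rho : 'M[C]_d) : 'M[C]_d :=
  \matrix_(a, b) (if (a : nat) == (b + j)%N then rho a b else 0).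

Definition mode2 (j : nat) (X : 'M[C]_D2) : 'M[C]_D2 :=
  \sum_(c < (2 * d).-1) (Pi (c + j) *m X *m Pi c).

Definition Mj (j : nat) (sigma : 'M[C]_d) : C := trnorm (mode1 j sigma).

(* |n+j, m><n, m|  (zero if n+j is out of range, i.e. such terms are absent) *)
Definition shiftop (j : nat) (ab : 'I_d * 'I_d) : 'M[C]_D2 :=
  match (insub (ab.1 + j)%N : option 'I_d) with
  | Some a' => delta_mx (ix (a', ab.2)) (ix ab)
  | None => 0
  end.

(* rows spanning V_in^(j,c) = span{ |n+j,m><n,m| : n+m = c } *)
Definition Vin_gen (j c : nat) : 'M[C]_(D2, D2 * D2) :=
  \matrix_(k < D2) (if Lval (pr k) == c then mxvec (shiftop j (pr k)) else 0).

Definition dimVin (j c : nat) : nat := \rank (Vin_gen j c).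

End Defs.

(* Main.v *)
Require Import Defs.
From HB Require Import structures.
From mathcomp Require Import all_boot all_order all_algebra.
From mathcomp Require Import zify.
Set Implicit Arguments. Unset Strict Implicit. Unset Printing Implicit Defensive.
Import Order.TTheory GRing.Theory Num.Theory.
Local Open Scope ring_scope.

Section KF.
Variable C : numClosedFieldType.

Definition ge_rel := (fun x y : C => y <= x).

Lemma sum_subc (s : seq C) t : \sum_(x <- s) (x - t) = \sum_(x <- s) x - t *+ size s.
Proof.
elim: s => [|x s IH]; first by rewrite !big_nil subr0.
by rewrite !big_cons IH /= mulrS; rewrite opprD addrACA.
Qed.

Definition pp (t x : C) := if t <= x then x - t else 0.

Lemma kf_bound (L : seq C) n (σ a : 'I_n -> C) (r : nat) :
  perm_eq L [seq σ i | i <- enum 'I_n] ->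
  (forall i, 0 <= σ i) -> (forall i, 0 <= a i <= 1) -> \sum_i a i <= r%:R ->
  \sum_i a i * σ i <= \sum_(s <- take r (sort ge_rel L)) s.
Proof.
move=> pL σge0 a01 suma.
set S := sort ge_rel L.
have pSL : perm_eq S L by rewrite /S perm_sort.
have pS : perm_eq S [seq σ i | i <- enum 'I_n] by rewrite /S perm_sort.
have Snn : all (fun x => 0 <= x) S.
  by rewrite (perm_all _ pS); apply/allP => x /mapP [i _ ->].
have sortS : sorted ge_rel S.
  apply: (@sort_sorted_in _ (fun x : C => 0 <= x)); last first.
    by rewrite -(perm_all _ pSL).
  move=> x y hx hy; rewrite /ge_rel orbC; apply: real_leVge; exact: ger0_real.
have trS : transitive ge_rel by move=> y x z hxy hyz; rewrite /ge_rel; exact: le_trans hyz hxy.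
have rfS : reflexive ge_rel by move=> x; exact: le_refl.
have claim1 : forall t, 0 <= t ->
  \sum_i a i * σ i <= \sum_(x <- S) pp t x + t * r%:R.
  move=> t t0.
  rewrite (perm_big _ pS) big_map big_enum /=.
  apply: (@le_trans _ _ (\sum_i (pp t (σ i) + a i * t))).
    apply: ler_sum => i _; rewrite /pp.
    have /andP [a0 a1] := a01 i.
    have rs : σ i \is Num.real := ger0_real (σge0 i).
    have rt : t \is Num.real := ger0_real t0.
    case: (real_leP rt rs) => h.
      rewrite -{1}(subrK t (σ i)) mulrDr lerD2r.
      rewrite -[X in _ <= X]mul1r ler_wpM2r // subr_ge0 //.
    by rewrite add0r ler_wpM2l // ltW.
  rewrite big_split /= lerD2l -mulr_suml mulrC ler_wpM2l //.
have Smem0 : forall x, x \in S -> 0 <= x by move=> x xS; exact: (allP Snn).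
case: (ltnP r (size S)) => hr; last first.
  apply: le_trans (claim1 0 (lexx 0)) _.
  rewrite mul0r addr0 take_oversize //.
  rewrite le_eqVlt; apply/orP; left; apply/eqP.
  rewrite big_seq [in RHS]big_seq; apply: eq_bigr => x xS.
  by rewrite /pp Smem0 // subr0.
set t := nth 0 S r.
have t0 : 0 <= t by apply: Smem0; rewrite mem_nth.
apply: le_trans (claim1 t t0) _.
rewrite -{1}(cat_take_drop r S) big_cat /=.
have -> : \sum_(x <- drop r S) pp t x = 0.
  rewrite big_seq big1 // => x /(nthP 0) [k]; rewrite size_drop => hk <-.
  rewrite nth_drop /pp.
  have h1 : nth 0 S (r + k) <= t.
    apply: (sorted_leq_nth trS rfS 0 sortS); rewrite ?inE ?leq_addr //.
    by rewrite -ltn_subRL.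
  case: ifP => // h2; apply/eqP; rewrite subr_eq0 eq_le h1 h2 //.
have -> : \sum_(x <- take r S) pp t x = \sum_(x <- take r S) (x - t).
  rewrite big_seq [in RHS]big_seq; apply: eq_bigr => x /(nthP 0) [k].
  rewrite size_take hr => hk <-; rewrite nth_take // /pp.
  have -> // : t <= nth 0 S k.
  apply: (sorted_leq_nth trS rfS 0 sortS); rewrite ?inE //; last exact: ltnW.
  exact: ltn_trans hk hr.
rewrite addr0 sum_subc size_take hr mulr_natr subrK //.
Qed.
End KF.

Section Adj.
Variable C : numClosedFieldType.

Lemma adjE m n (A : 'M[C]_(m, n)) : adj A = (A ^t* )%sesqui.
Proof. by rewrite /adj map_trmx. Qed.

Lemma adj_entry m n (A : 'M[C]_(m, n)) i j : adj A i j = (A j i)^*.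
Proof. by rewrite /adj !mxE. Qed.

Lemma adjK m n (A : 'M[C]_(m, n)) : adj (adj A) = A.
Proof. by apply/matrixP => i j; rewrite !adj_entry conjCK. Qed.

Lemma adj_mul m n p (A : 'M[C]_(m, n)) (B : 'M[C]_(n, p)) :
  adj (A *m B) = adj B *m adj A.
Proof. by rewrite /adj map_mxM trmx_mul. Qed.

Lemma adjD m n (A B : 'M[C]_(m, n)) : adj (A + B) = adj A + adj B.
Proof. by apply/matrixP => i j; rewrite !mxE rmorphD. Qed.

Lemma adjN m n (A : 'M[C]_(m, n)) : adj (- A) = - adj A.
Proof. by apply/matrixP => i j; rewrite !mxE rmorphN. Qed.

Lemma adjB m n (A B : 'M[C]_(m, n)) : adj (A - B) = adj A - adj B.
Proof. by rewrite adjD adjN. Qed.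

Lemma adj1 n : adj (1%:M : 'M[C]_n) = 1%:M.
Proof. by rewrite /adj map_mx1 trmx1. Qed.

Lemma adj_diag n (d : 'rV[C]_n) : (forall i, d 0 i \is Num.real) -> adj (diag_mx d) = diag_mx d.
Proof.
move=> hd; apply/matrixP => i j; rewrite adj_entry !mxE eq_sym.
case: eqP => [->|]; rewrite ?mulr1n ?mulr0n ?conjC0 //.
by rewrite conj_Creal.
Qed.

Lemma psd_diag m n (A : 'M[C]_(m, n)) i :
  (A *m adj A) i i = \sum_k `|A i k| ^+ 2.
Proof. by rewrite !mxE; apply: eq_bigr => k _; rewrite adj_entry normCK. Qed.

Lemma psd_diag_ge0 m n (A : 'M[C]_(m, n)) i : 0 <= (A *m adj A) i i.
Proof. by rewrite psd_diag sumr_ge0 // => k _; rewrite exprn_ge0. Qed.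

Lemma psd_tr_ge0 n (A : 'M[C]_n) : 0 <= \tr (A *m adj A).
Proof. by rewrite /mxtrace sumr_ge0 // => i _; exact: psd_diag_ge0. Qed.

Lemma unitary_sym n (V : 'M[C]_n) : V *m adj V = 1%:M -> adj V *m V = 1%:M.
Proof. exact: mulmx1C. Qed.

Lemma char_poly_sim n (A B D : 'M[C]_n) : B *m A = 1%:M ->
  char_poly (B *m D *m A) = char_poly D.
Proof.
move=> BA; rewrite /char_poly /char_poly_mx.
set A' := map_mx polyC A; set B' := map_mx polyC B.
have BA' : B' *m A' = 1%:M by rewrite /A' /B' -map_mxM BA map_mx1.
have -> : 'X%:M - map_mx polyC (B *m D *m A) = B' *m ('X%:M - map_mx polyC D) *m A'.
  rewrite mulmxBr mulmxBl [B' *m 'X%:M]scalar_mxC -[_ *m B' *m A']mulmxA BA' mulmx1 /A' /B'.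
  by rewrite -!map_mxM.
rewrite !det_mulmx mulrAC -det_mulmx BA' det1 mul1r //.
Qed.

Lemma psd_diag' m n (A : 'M[C]_(m, n)) i :
  (adj A *m A) i i = \sum_k `|A k i| ^+ 2.
Proof. by rewrite !mxE; apply: eq_bigr => k _; rewrite adj_entry normCKC. Qed.

Lemma psd_diag_ge0' m n (A : 'M[C]_(m, n)) i : 0 <= (adj A *m A) i i.
Proof. by rewrite psd_diag' sumr_ge0 // => k _; rewrite exprn_ge0. Qed.

Lemma mxdiagE m n (A : 'M[C]_(m, n)) (f : 'I_n -> C) k i :
  (A *m diag_mx (\row_j f j)) k i = A k i * f i.
Proof. by rewrite mul_mx_diag !mxE. Qed.

Lemma svd_data n (X : 'M[C]_n) : exists (Q U : 'M[C]_n) (σ : 'I_n -> C),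
  [/\ Q *m adj Q = 1%:M, adj Q *m Q = 1%:M,
      X *m Q = U *m diag_mx (\row_i σ i),
      adj U *m U = diag_mx (\row_i (σ i != 0)%:R) &
      U *m diag_mx (\row_i (σ i != 0)%:R) = U] /\
  (forall i, 0 <= σ i) /\
  perm_eq (singvals X) [seq σ i | i <- enum 'I_n].
Proof.
pose H := adj X *m X.
have Hn : H \is normalmx by apply/normalmxP; rewrite -!adjE /H adj_mul adjK.
have /orthomx_spectralP hH := Hn.
move: hH; set P := spectralmx H; set lam := spectral_diag H => hH.
have PU : P *m adj P = 1%:M by rewrite adjE; apply/unitarymxP; exact: spectral_unitarymx.
have iP : invmx P = adj P by rewrite adjE invmx_unitary // spectral_unitarymx.
pose Q := adj P.
have QQ : Q *m adj Q = 1%:M by rewrite /Q adjK unitary_sym.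
have QQ' : adj Q *m Q = 1%:M by rewrite /Q adjK.
have HD : adj Q *m H *m Q = diag_mx lam.
  rewrite /Q adjK {1}hH iP !mulmxA PU mul1mx -mulmxA PU mulmx1 //.
have XQ : adj (X *m Q) *m (X *m Q) = diag_mx lam.
  by rewrite adj_mul -HD /H !mulmxA.
have lamE : forall i, lam 0 i = \sum_k `|(X *m Q) k i| ^+ 2.
  by move=> i; rewrite -psd_diag' XQ mxE eqxx mulr1n.
have lam0 : forall i, 0 <= lam 0 i.
  by move=> i; rewrite lamE sumr_ge0 // => k _; rewrite exprn_ge0.
pose σ i := sqrtC (lam 0 i).
have σ0 : forall i, 0 <= σ i by move=> i; rewrite sqrtC_ge0.
have σ2 : forall i, σ i ^+ 2 = lam 0 i by move=> i; rewrite sqrtCK.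
have colz : forall i, σ i = 0 -> forall k, (X *m Q) k i = 0.
  move=> i /eqP; rewrite sqrtC_eq0 lamE => /eqP h k.
  have := psumr_eq0P (fun k _ => exprn_ge0 2 (normr_ge0 ((X *m Q) k i))) h.
  by move=> /(_ k isT) /eqP; rewrite sqrf_eq0 normr_eq0 => /eqP.
pose s i := if σ i == 0 then 0 else (σ i)^-1.
have sreal : forall i, s i \is Num.real.
  by move=> i; rewrite /s; case: ifP => _; rewrite ?real0 // realV ger0_real.
pose U := X *m Q *m diag_mx (\row_i s i).
exists Q, U, σ; split; [split => // | split => //].
- apply/matrixP => k i; rewrite /U !mxdiagE /s.
  case: ifPn => [/eqP h|h]; first by rewrite mulr0 mul0r colz.
  by rewrite divfK.
- rewrite /U adj_mul adj_diag; last by move=> i; rewrite mxE.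
  set D := diag_mx (\row_i s i).
  have -> : D *m adj (X *m Q) *m (X *m Q *m D) = D *m (adj (X *m Q) *m (X *m Q)) *m D.
    by rewrite !mulmxA.
  rewrite XQ /D mulmx_diag mulmx_diag; congr diag_mx; apply/rowP => i.
  rewrite !mxE /s; case: ifPn => [|h]; rewrite ?mul0r //.
  by rewrite -σ2 expr2 mulrA mulVf // mul1r mulfV.
- apply/matrixP => k i; rewrite /U !mxdiagE mxE /s.
  by case: ifPn => h; rewrite ?mulr0 ?mulr1.
rewrite /singvals (map_comp sqrtC (fun i => lam 0 i)) perm_map //.
rewrite /eigvals; case: (closed_field_poly_normal (char_poly H)) => r /= hr.
have lc : lead_coef (char_poly H) = 1 by apply/monicP; exact: char_poly_monic.
rewrite lc scale1r in hr.
apply: prod_XsubC_eq; rewrite -hr big_map big_enum /=.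
rewrite {1}hH iP char_poly_sim; last exact: unitary_sym.
rewrite char_poly_trig ?diag_mx_is_trig //.
by apply: eq_bigr => i _; rewrite mxE eqxx mulr1n.
Qed.

Lemma amgm m k (x : 'M[C]_(m, k)) (y : 'M[C]_(k, m)) i :
  `|(x *m y) i i| <= ((x *m adj x) i i + (adj y *m y) i i) / 2.
Proof.
rewrite psd_diag psd_diag' -big_split /= mulr_suml mxE.
apply: le_trans (ler_norm_sum _ _ _) _; apply: ler_sum => l _.
rewrite normrM.
set a := `|x i l|; set b := `|y l i|.
have ha : a \is Num.real by rewrite realE normr_ge0.
have hb : b \is Num.real by rewrite realE normr_ge0.
have h : 0 <= (a - b) ^+ 2 by rewrite real_exprn_even_ge0 // rpredB.
rewrite sqrrB in h.
rewrite ler_pdivlMr ?ltr0n // mulr_natr -subr_ge0.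
by rewrite addrAC.
Qed.

Lemma half_le (x y z : C) : x <= z -> y <= z -> (x + y) / 2 <= z.
Proof.
move=> hx hy; rewrite ler_pdivrMr ?ltr0n // mulr_natr mulr2n.
exact: lerD.
Qed.

Lemma mx1ii n (i : 'I_n) : (1%:M : 'M[C]_n) i i = 1.
Proof. by rewrite mxE eqxx. Qed.
Lemma mxDE m n (M N : 'M[C]_(m, n)) i j : (M + N) i j = M i j + N i j.
Proof. by rewrite mxE. Qed.
Lemma mxNE m n (M : 'M[C]_(m, n)) i j : (- M) i j = - M i j.
Proof. by rewrite mxE. Qed.

Lemma tr_diagE n (N : 'M[C]_n) (f : 'I_n -> C) :
  \tr (N *m diag_mx (\row_i f i)) = \sum_i N i i * f i.
Proof. by rewrite /mxtrace; apply: eq_bigr => i _; rewrite mxdiagE. Qed.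

Lemma core n r (X G A B K1 K2 K3 : 'M[C]_n) :
  1%:M - A *m adj A = K1 *m adj K1 ->
  1%:M - adj B *m B = K2 *m adj K2 ->
  1%:M - G *m adj G = K3 *m adj K3 ->
  \tr (A *m adj A) <= r%:R -> \tr (adj B *m B) <= r%:R ->
  `|\tr (A *m G *m B *m X)| <= kyfan r X.
Proof.
move=> hA hB hG trA trB.
have [Q [U [σ [[QQ QQ' XQ UU Ue] [σ0 pσ]]]]] := svd_data X.
pose N := adj Q *m A *m G *m B *m U.
have trE : \tr (A *m G *m B *m X) = \sum_i N i i * σ i.
  rewrite -tr_diagE /N -[X in \tr X]mulmx1 -QQ mulmxA mxtrace_mulC.
  by rewrite -!mulmxA XQ.
pose p i := (adj Q *m A *m adj A *m Q) i i.
pose q i := (adj U *m adj B *m B *m U) i i.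
pose a i := (p i + q i) / 2.
have p0 : forall i, 0 <= p i.
  move=> i; rewrite /p; have -> : adj Q *m A *m adj A *m Q = (adj Q *m A) *m adj (adj Q *m A).
    by rewrite adj_mul adjK !mulmxA.
  exact: psd_diag_ge0.
have q0 : forall i, 0 <= q i.
  move=> i; rewrite /q; have -> : adj U *m adj B *m B *m U = adj (B *m U) *m (B *m U).
    by rewrite adj_mul !mulmxA.
  exact: psd_diag_ge0'.
have p1 : forall i, p i <= 1.
  move=> i; rewrite /p; have -> : adj Q *m A *m adj A *m Q = 1%:M - (adj Q *m K1) *m adj (adj Q *m K1).
    rewrite adj_mul adjK -!mulmxA (mulmxA K1) -hA mulmxBl mulmxBr mul1mx QQ'.
    by rewrite opprB addrC subrK !mulmxA.
  rewrite mxDE mxNE mx1ii lerBlDr lerDl; exact: psd_diag_ge0.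
have q1 : forall i, q i <= 1.
  move=> i; rewrite /q; have -> : adj U *m adj B *m B *m U = adj U *m U - (adj U *m K2) *m adj (adj U *m K2).
    rewrite adj_mul adjK -!mulmxA (mulmxA K2) -hB mulmxBl mulmxBr mul1mx.
    by rewrite opprB addrC subrK !mulmxA.
  rewrite mxDE mxNE lerBlDr UU mxE mxE eqxx mulr1n.
  apply: le_trans (_ : 1 <= _).
    by case: (σ i != 0); rewrite ?ler01 ?lexx.
  rewrite lerDl; exact: psd_diag_ge0.
have a01 : forall i, 0 <= a i <= 1.
  move=> i; apply/andP; split; last exact: half_le.
  by rewrite /a divr_ge0 ?addr_ge0 ?ler0n.
have suma : \sum_i a i <= r%:R.
  rewrite /a -mulr_suml big_split /=; apply: half_le.
    by rewrite /p -/(mxtrace _) mxtrace_mulC !mulmxA QQ mul1mx.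
  rewrite /q -/(mxtrace _) mxtrace_mulC -!mulmxA mxtrace_mulC !mulmxA.
  apply: le_trans trB.
  set R := 1%:M - U *m adj U.
  have RR : R *m adj R = R.
    rewrite /R adjB adj1 adj_mul adjK mulmxBl mul1mx mulmxBr mulmx1.
    by rewrite mulmxA -(mulmxA U) UU Ue subrr subr0.
  have : 0 <= \tr (adj (B *m R) *m (B *m R)).
    by have := psd_tr_ge0 (adj (B *m R)); rewrite adjK.
  rewrite adj_mul; set W := adj B *m B.
  have -> : adj R *m adj B *m (B *m R) = adj R *m (W *m R) by rewrite /W !mulmxA.
  move=> h; rewrite mxtrace_mulC -mulmxA RR /R mulmxBr mulmx1 raddfB /= subr_ge0 in h.
  apply: le_trans h; rewrite le_eqVlt; apply/orP; left; apply/eqP.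
  by rewrite [LHS]mxtrace_mulC /W mulmxA [RHS]mxtrace_mulC !mulmxA.
apply: le_trans (_ : \sum_i a i * σ i <= _); last first.
  exact: kf_bound pσ σ0 a01 suma.
rewrite trE; apply: le_trans (ler_norm_sum _ _ _) _; apply: ler_sum => i _.
rewrite normrM (ger0_norm (σ0 i)) ler_wpM2r //.
have := amgm (adj Q *m A *m G) (B *m U) i.
rewrite /N !mulmxA => h; apply: le_trans h _.
rewrite /a /p /q; apply: ler_wpM2r; first by rewrite invr_ge0 ler0n.
have -> : adj (B *m U) *m B *m U = adj U *m adj B *m B *m U by rewrite adj_mul.
rewrite lerD2r.
have hG' : G *m adj G = 1%:M - K3 *m adj K3 by rewrite -hG opprB addrC subrK.
set Y := adj Q *m A.
have e1 : Y *m G *m adj (Y *m G) = Y *m adj Y - (Y *m K3) *m adj (Y *m K3).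
  rewrite !adj_mul -[Y *m G *m _]mulmxA (mulmxA G) hG' mulmxBl mul1mx mulmxBr.
  by rewrite !mulmxA.
have e2 : Y *m adj Y = adj Q *m A *m adj A *m Q by rewrite /Y adj_mul adjK !mulmxA.
rewrite e1 e2 mxDE mxNE lerBlDr lerDl; exact: psd_diag_ge0.
Qed.

Lemma trnorm_ge0 n (Y : 'M[C]_n) : 0 <= trnorm Y.
Proof.
have [Q [U [σ [_ [σ0 pσ]]]]] := svd_data Y.
by rewrite /trnorm (perm_big _ pσ) big_map sumr_ge0.
Qed.

Lemma trnorm_tr n (Y : 'M[C]_n) : exists M K : 'M[C]_n,
  1%:M - M *m adj M = K *m adj K /\ trnorm Y = \tr (M *m Y).
Proof.
have [Q [U [σ [[QQ QQ' YQ UU Ue] [σ0 pσ]]]]] := svd_data Y.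
set E := diag_mx (\row_i (σ i != 0)%:R) in UU Ue *.
have Er : adj E = E by rewrite adj_diag // => i; rewrite mxE; case: (_ != 0); rewrite ?real0 ?real1.
have EE : E *m E = E.
  rewrite /E mulmx_diag; congr diag_mx; apply/rowP => i; rewrite !mxE.
  by case: (_ != 0); rewrite ?mulr1 ?mulr0.
exists (Q *m adj U), (Q *m (1%:M - E)); split.
  rewrite !adj_mul adjK adjB adj1 Er [in LHS]mulmxA -(mulmxA Q (adj U)) UU.
  rewrite [in RHS]mulmxA -(mulmxA Q (1%:M - E)).
  rewrite [(1%:M - E) *m _]mulmxBl mul1mx [E *m _]mulmxBr mulmx1 EE subrr subr0.
  by rewrite mulmxBr mulmx1 mulmxBl QQ.
rewrite mxtrace_mulC mulmxA mxtrace_mulC mulmxA -mulmxA YQ mulmxA UU tr_diagE.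
rewrite /trnorm (perm_big _ pσ) big_map big_enum /=.
apply: eq_bigr => i _; rewrite /E mxE eqxx mulr1n mxE.
by case: eqP => [->|]; rewrite ?mulr1 ?mulr0 ?mul1r.
Qed.

End Adj.

Section Struct.
Variable C : numClosedFieldType.
Variable d : nat.
Local Notation n2 := (D2 d).
Local Notation L k := (Lval (pr k)).

Lemma prix (ab : 'I_d * 'I_d) : pr (ix ab) = ab.
Proof. exact: enum_rankK. Qed.

Lemma ixpr (k : 'I_n2) : ix (pr k) = k.
Proof. exact: enum_valK. Qed.

Lemma sum_pr (F : 'I_n2 -> C) :
  \sum_k F k = \sum_(a : 'I_d) \sum_(b : 'I_d) F (ix (a, b)).
Proof.
rewrite pair_bigA /=.
rewrite (reindex (@ix d)) /=; last first.
  by exists (@pr d) => k _; [exact: prix | exact: ixpr].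
by apply: eq_bigr => -[a b].
Qed.

Lemma diagmxE m (A : 'M[C]_(m, m)) (f : 'I_m -> C) k i :
  (diag_mx (\row_j f j) *m A) k i = f k * A k i.
Proof. by rewrite mul_diag_mx !mxE. Qed.

Lemma Lval_lt (k : 'I_n2) : (L k < (2 * d).-1)%N.
Proof.
rewrite /Lval; case: (pr k) => a b /=.
have ha := ltn_ord a; have hb := ltn_ord b.
rewrite mul2n -addnn; case: d a b ha hb => [|dd] a b ha hb //.
rewrite addSn /=; rewrite -ltnS in ha; rewrite -addSnnS. 
by apply: leq_add; rewrite -ltnS.
Qed.

Lemma Pi_diag c : Pi C d c = diag_mx (\row_k (L k == c)%:R).
Proof.
apply/matrixP => k l; rewrite !mxE; case: (k =P l) => [->|_].
  by rewrite /= mulr1n.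
by rewrite andFb mulr0n.
Qed.

Lemma PiXPi a b (X : 'M[C]_n2) k l :
  (Pi C d a *m X *m Pi C d b) k l = (L k == a)%:R * X k l * (L l == b)%:R.
Proof. by rewrite !Pi_diag mxdiagE diagmxE. Qed.

Lemma mode2E j (X : 'M[C]_n2) k l :
  mode2 j X k l = (L k == (L l + j)%N)%:R * X k l.
Proof.
rewrite /mode2 summxE (bigD1 (Ordinal (Lval_lt l))) //= big1 ?addr0.
  rewrite PiXPi eqxx mulr1; congr (_ * _); by rewrite [(L l + j)%N]addnC.
move=> c hc; rewrite PiXPi.
case: (L l =P c) => [e|_]; last by rewrite mulr0.
by exfalso; move/eqP: hc; apply; apply: val_inj; rewrite /= e.
Qed.

Lemma tensE (A B : 'M[C]_d) k l :
  tens A B k l = A (pr k).1 (pr l).1 * B (pr k).2 (pr l).2.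
Proof. by rewrite mxE. Qed.

Lemma tens_mul (A B A' B' : 'M[C]_d) :
  tens A B *m tens A' B' = tens (A *m A') (B *m B').
Proof.
apply/matrixP => k l; rewrite tensE !mxE sum_pr.
rewrite big_distrlr /=; apply: eq_bigr => a _; apply: eq_bigr => b _.
by rewrite !tensE prix /= mulrACA.
Qed.

Lemma adj_tens (A B : 'M[C]_d) : adj (tens A B) = tens (adj A) (adj B).
Proof. by apply/matrixP => k l; rewrite adj_entry !tensE !adj_entry rmorphM. Qed.

Lemma tens11 : tens (1%:M : 'M[C]_d) 1%:M = 1%:M.
Proof.
apply/matrixP => k l; rewrite tensE !mxE -natrM mulnb.
have -> : (k == l) = ((pr k).1 == (pr l).1) && ((pr k).2 == (pr l).2) => //.
rewrite -[k in LHS]ixpr -[l in LHS]ixpr.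
case: (pr k) => a b; case: (pr l) => a' b' /=.
apply/idP/idP.
  by move/eqP/(can_inj (@prix)) => [-> ->]; rewrite !eqxx.
by case/andP => /eqP -> /eqP ->.
Qed.

Lemma tensBl (A A' B : 'M[C]_d) : tens (A - A') B = tens A B - tens A' B.
Proof. by apply/matrixP => k l; rewrite !mxE mulrBl. Qed.

Lemma LAB_diag : LAB C d = diag_mx (\row_k (L k)%:R).
Proof.
apply/matrixP => k l; rewrite !mxE; case: (k =P l) => [->|_].
  by rewrite /= mul1r mulr1n.
by rewrite mul0r mulr0n.
Qed.

Definition blockp (W : 'M[C]_n2) := forall k l, L k != L l -> W k l = 0.

Lemma block (V : 'M[C]_n2) : V *m LAB C d = LAB C d *m V -> blockp V.
Proof.
move=> hV k l hkl; have := congr1 (fun M : 'M[C]_n2 => M k l) hV.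
rewrite /= LAB_diag mxdiagE diagmxE mulrC => /eqP; rewrite -subr_eq0 -mulrBl mulf_eq0.
case/orP => [|/eqP //]; rewrite subr_eq0 eqr_nat => h.
by move: hkl; rewrite eq_sym h.
Qed.

Lemma block_adj (V : 'M[C]_n2) : blockp V -> blockp (adj V).
Proof. by move=> hV k l hkl; rewrite adj_entry hV ?conjC0 // eq_sym. Qed.

Lemma Pi_comm (W : 'M[C]_n2) c : blockp W -> W *m Pi C d c = Pi C d c *m W.
Proof.
move=> hW; apply/matrixP => k l; rewrite Pi_diag mxdiagE diagmxE.
case: (L k =P L l) => [->|/eqP h]; first by rewrite mulrC.
by rewrite hW // mulr0 mul0r.
Qed.

Lemma mode2_conj j (V X : 'M[C]_n2) : blockp V -> blockp (adj V) ->
  mode2 j (V *m X *m adj V) = V *m mode2 j X *m adj V.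
Proof.
move=> hV hV'; rewrite /mode2 mulmx_sumr mulmx_suml; apply: eq_bigr => c _.
rewrite !mulmxA -(Pi_comm _ hV) -mulmxA (Pi_comm _ hV') !mulmxA //.
Qed.

Lemma tr_mode j (M : 'M[C]_d) (Z : 'M[C]_n2) :
  \tr (M *m mode1 j (ptraceB Z)) = \tr (tens M 1%:M *m mode2 j Z).
Proof.
rewrite /mxtrace sum_pr.
have -> : \sum_a (M *m mode1 j (ptraceB Z)) a a =
    \sum_(a : 'I_d) \sum_(b : 'I_d) \sum_(m : 'I_d) M a b * ((b == (a + j)%N :> nat)%:R * Z (ix (b, m)) (ix (a, m))).
  apply: eq_bigr => a _; rewrite mxE; apply: eq_bigr => b _.
  rewrite [mode1 _ _ _ _]mxE; case: eqP => _.
    by rewrite mxE mulr_sumr; apply: eq_bigr => m _; rewrite mul1r.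
  by rewrite mulr0 big1 // => m _; rewrite mul0r mulr0.
apply: eq_bigr => a _.
rewrite exchange_big /=; apply: eq_bigr => m _.
rewrite mxE sum_pr; apply: eq_bigr => b _.
rewrite (bigD1 m) //= big1 ?addr0; last first.
  move=> m' hm'; rewrite tensE !prix /= mxE eq_sym (negbTE hm') mulr0 mul0r //.
rewrite tensE mode2E !prix /= mxE eqxx mulr1 /Lval /=.
by rewrite -addnA (addnC m j) addnA eqn_add2r.
Qed.

Definition Dg (p : pred 'I_n2) : 'M[C]_n2 := diag_mx (\row_k (p k)%:R).

Lemma Dg_adj p : adj (Dg p) = Dg p.
Proof. by rewrite adj_diag // => k; rewrite mxE; case: (p k); rewrite ?real0 ?real1. Qed.

Lemma Dg_idem p : Dg p *m Dg p = Dg p.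
Proof.
rewrite /Dg mulmx_diag; congr diag_mx; apply/rowP => k; rewrite !mxE.
by case: (p k); rewrite ?mulr1 ?mulr0.
Qed.

Lemma Dg_tr p : \tr (Dg p) = #|p|%:R.
Proof.
rewrite mxtrace_diag.
transitivity (\sum_(k | p k) (1 : C)).
  by rewrite [RHS]big_mkcond /=; apply: eq_bigr => k _; rewrite mxE; case: (p k).
by rewrite sumr_const.
Qed.

Lemma proj_hyps (V : 'M[C]_n2) (p : pred 'I_n2) : V *m adj V = 1%:M ->
  (exists K : 'M[C]_n2, 1%:M - (adj V *m Dg p) *m adj (adj V *m Dg p) = K *m adj K) /\
  (exists K : 'M[C]_n2, 1%:M - adj (Dg p *m V) *m (Dg p *m V) = K *m adj K) /\
  \tr ((adj V *m Dg p) *m adj (adj V *m Dg p)) = #|p|%:R /\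
  \tr (adj (Dg p *m V) *m (Dg p *m V)) = #|p|%:R.
Proof.
move=> VV; have VV' := unitary_sym VV.
have e1 : (adj V *m Dg p) *m adj (adj V *m Dg p) = adj V *m Dg p *m V.
  by rewrite adj_mul adjK Dg_adj mulmxA -(mulmxA (adj V)) Dg_idem.
have e2 : adj (Dg p *m V) *m (Dg p *m V) = adj V *m Dg p *m V.
  by rewrite adj_mul Dg_adj mulmxA -(mulmxA (adj V)) Dg_idem.
have tr1 : \tr (adj V *m Dg p *m V) = #|p|%:R.
  by rewrite mxtrace_mulC mulmxA VV mul1mx Dg_tr.
have K1 : 1%:M - adj V *m Dg p *m V = (adj V *m (1%:M - Dg p)) *m adj (adj V *m (1%:M - Dg p)).
  have E : (1%:M - Dg p) *m (1%:M - Dg p) = 1%:M - Dg p.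
    by rewrite mulmxBl mul1mx mulmxBr mulmx1 Dg_idem subrr subr0.
  rewrite adj_mul adjK adjB adj1 Dg_adj [in RHS]mulmxA -[in RHS](mulmxA (adj V)) E.
  by rewrite mulmxBr mulmx1 mulmxBl VV'.
by rewrite e1 e2 tr1; split; [|split]; try (by exists (adj V *m (1%:M - Dg p))).
Qed.

Lemma tens_contr (M K : 'M[C]_d) : 1%:M - M *m adj M = K *m adj K ->
  1%:M - tens M 1%:M *m adj (tens M 1%:M) = tens K 1%:M *m adj (tens K 1%:M).
Proof.
move=> h; rewrite !adj_tens adj1 !tens_mul mulmx1 -h tensBl tens11 //.
Qed.

Lemma Pi_idem c : Pi C d c *m Pi C d c = Pi C d c.
Proof.
rewrite Pi_diag mulmx_diag; congr diag_mx; apply/rowP => k; rewrite !mxE.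
by case: (_ == _); rewrite ?mulr1 ?mulr0.
Qed.

Definition pc j c : pred 'I_n2 := fun k => (L k == c) && ((pr k).1 + j < d)%N.
Definition pc' j c : pred 'I_n2 := fun k => (L k == c + j)%N && (j <= (pr k).1)%N.

Lemma DTD j c (M : 'M[C]_d) :
  Dg (pc j c) *m tens M 1%:M *m Dg (pc' j c) = Pi C d c *m tens M 1%:M *m Pi C d (c + j).
Proof.
apply/matrixP => k l; rewrite !Pi_diag /Dg !mxdiagE !diagmxE !mxE.
rewrite /pc /pc' /Lval.
case: (pr k) => a b; case: (pr l) => a' b' /=.
case: (b =P b') => [<-|_]; last by rewrite !mulr0 !mul0r.
case: ((a + b)%N =P c) => h1; last by rewrite /= !mul0r.
case: ((a' + b)%N =P (c + j)%N) => h2; last by rewrite /= ?mul0r ?mulr0.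
have -> : (a + j < d)%N by have := ltn_ord a'; lia.
by have -> : (j <= a')%N by lia.
Qed.

Lemma Pi_mode2 j c (X : 'M[C]_n2) :
  Pi C d (c + j) *m mode2 j X *m Pi C d c = Pi C d (c + j) *m X *m Pi C d c.
Proof.
apply/matrixP => k l; rewrite !PiXPi mode2E.
case: (L k =P (c + j)%N) => [->|_]; last by rewrite !mul0r.
case: (L l =P c) => [->|_]; last by rewrite !mulr0.
by rewrite eqxx mul1r.
Qed.

Lemma Pi_big c : ((2 * d).-1 <= c)%N -> Pi C d c = 0.
Proof.
move=> hc; apply/matrixP => k l; rewrite mxE [(0 : 'M[C]_n2) k l]mxE.
have := Lval_lt k; case: (L k =P c) => [->|]; last by rewrite andbF.
by rewrite ltnNge hc.
Qed.

Lemma shiftop_eq j (ab : 'I_d * 'I_d) : (ab.1 + j < d)%N ->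
  shiftop C j ab = delta_mx (ix (insubd ab.1 (ab.1 + j)%N, ab.2)) (ix ab).
Proof.
move=> h; rewrite /shiftop; case: insubP => [u hu vu|]; last by rewrite h.
by congr delta_mx; congr ix; congr pair; apply: val_inj; rewrite val_insubd hu vu.
Qed.

Lemma Vin_entry j c k x :
  Vin_gen C d j c k x = (if L k == c then mxvec (shiftop C j (pr k)) else 0) 0 x.
Proof. by rewrite mxE. Qed.

Lemma card_pc_le j c : (#|pc j c| <= dimVin C d j c)%N.
Proof.
pose f (i : 'I_#|pc j c|) : 'I_n2 := enum_val i.
have fi : forall i, pc j c (f i) by move=> i; exact: (enum_valP i).
pose s i := (insubd (pr (f i)).1 ((pr (f i)).1 + j)%N, (pr (f i)).2).
pose g i := mxvec_index (ix (s i)) (f i).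
apply: (@mulmx1_min_rank _ _ _ _ _ (rowsub f 1%:M) (colsub g 1%:M)).
rewrite -rowsubE mulmx_colsub mulmx1; apply/matrixP => i i'.
rewrite [LHS]mxE [LHS]mxE Vin_entry.
have /andP [/eqP -> hi] := fi i.
rewrite eqxx shiftop_eq // ixpr mxvecE mxE [RHS]mxE.
case: (i =P i') => [<-|hii]; first by rewrite !eqxx.
have -> : (f i' == f i) = false.
  by apply/eqP => /enum_val_inj h; apply: hii.
by rewrite andbF.
Qed.

Lemma card_pc'_le j c : (#|pc' j c| <= #|pc j c|)%N.
Proof.
pose h (k : 'I_n2) : 'I_n2 := ix (insubd (pr k).1 ((pr k).1 - j)%N, (pr k).2).
have hv : forall k, ((pr k).1 - j < d)%N -> ((pr (h k)).1 : nat) = ((pr k).1 - j)%N.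
  by move=> k hk; rewrite /h prix /= val_insubd hk.
rewrite -(card_in_imset (f := h)); last first.
  move=> k k'; rewrite !unfold_in /pc' /= => /andP [_ hk] /andP [_ hk'] e.
  rewrite -[k]ixpr -[k']ixpr; congr ix.
  have e1 := congr1 (fun x => (pr x).1 : nat) e; have e2 := congr1 (fun x => (pr x).2) e.
  rewrite /= !hv in e1; try (have := ltn_ord (pr k).1; have := ltn_ord (pr k').1; lia).
  rewrite /h !prix /= in e2.
  case: (pr k) e1 e2 hk => a b; case: (pr k') hk' => a' b' /= ha' e1 e2 ha.
  by rewrite e2; congr pair; apply: val_inj => /=; lia.
apply: subset_leq_card; apply/subsetP => x /imsetP [k hk ->].
move: hk; rewrite !unfold_in /pc' /pc /= => /andP [/eqP hL hj].
have hk1 : ((pr k).1 - j < d)%N by have := ltn_ord (pr k).1; lia.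
rewrite /Lval hv //; rewrite /h prix /=; rewrite /Lval in hL.
apply/andP; split; first by apply/eqP; lia.
by have := ltn_ord (pr k).1; lia.
Qed.

Lemma term_eq j c (M : 'M[C]_d) (X : 'M[C]_n2) (W : 'M[C]_n2) :
  blockp W -> blockp (adj W) ->
  \tr (adj W *m tens M 1%:M *m W *m (Pi C d (c + j) *m X *m Pi C d c)) =
  \tr ((adj W *m Dg (pc j c)) *m tens M 1%:M *m (Dg (pc' j c) *m W) *m
       (Pi C d (c + j) *m mode2 j X *m Pi C d c)).
Proof.
move=> hW hW'; set T := tens M 1%:M.
have e1 : (adj W *m Dg (pc j c)) *m T *m (Dg (pc' j c) *m W) =
          Pi C d c *m (adj W *m T *m W) *m Pi C d (c + j).
  have -> : (adj W *m Dg (pc j c)) *m T *m (Dg (pc' j c) *m W) =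
            adj W *m (Dg (pc j c) *m T *m Dg (pc' j c)) *m W by rewrite !mulmxA.
  rewrite DTD !mulmxA (Pi_comm _ hW') -!mulmxA (Pi_comm _ hW) //.
rewrite e1 Pi_mode2.
set Y := adj W *m T *m W.
have -> : Pi C d c *m Y *m Pi C d (c + j) *m (Pi C d (c + j) *m X *m Pi C d c) =
          Pi C d c *m (Y *m Pi C d (c + j) *m X *m Pi C d c).
  by rewrite -!mulmxA (mulmxA (Pi C d (c + j))) Pi_idem.
rewrite [RHS]mxtrace_mulC; congr mxtrace; apply/esym; by rewrite -(mulmxA _ (Pi C d c) (Pi C d c)) Pi_idem !mulmxA.
Qed.

End Struct.

Unset Implicit Arguments.
Unset Strict Implicit.

Theorem mainTheorem7 (C : numClosedFieldType) (d : nat) (rho : 'M[C]_d) (j : nat) :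
  density rho ->
  (1 <= j <= d - 1)%N ->
  forall V : 'M[C]_(D2 d),
    unitary V ->
    V *m LAB C d = LAB C d *m V ->
    Mj j (ptraceB (V *m tens rho rho *m adj V)) - Mj j rho <=
    \sum_(c < (2 * d - 1 - j)%N)
        kyfan (dimVin C d j c)
              (Pi C d (c + j) *m mode2 j (tens rho rho) *m Pi C d c)
    - Mj j rho.
Proof.
move=> _ _ V VV hVL; rewrite lerD2r.
set X := tens rho rho.
have hV := block hVL; have hV' := block_adj hV.
rewrite /Mj; set Y := mode1 j _.
have Y0 := trnorm_ge0 Y.
have [M [K [hK E]]] := trnorm_tr Y.
rewrite E in Y0 *; rewrite /Y tr_mode mode2_conj // in Y0 *.
set T := tens M 1%:M.
have E2 : \tr (T *m (V *m mode2 j X *m adj V)) =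
   \sum_(c < (2 * d - 1 - j)%N) \tr ((adj V *m Dg C (pc j c)) *m T *m (Dg C (pc' j c) *m V) *m
       (Pi C d (c + j) *m mode2 j X *m Pi C d c)).
  transitivity (\sum_(c < (2 * d - 1 - j)%N)
      \tr (adj V *m T *m V *m (Pi C d (c + j) *m X *m Pi C d c))); last first.
    by apply: eq_bigr => c _; rewrite term_eq.
  rewrite !mulmxA mxtrace_mulC !mulmxA /mode2 mulmx_sumr raddf_sum.
  rewrite [RHS](big_ord_widen ((2 * d).-1) (fun c : nat => \tr (adj V *m T *m V *m (Pi C d (c + j) *m X *m Pi C d c)))); last by lia.
  rewrite [RHS]big_mkcond; apply: eq_bigr => c _ /=.
  case: ifP => // hc.
  rewrite Pi_big ?mulmx0 ?mul0mx ?linear0 //; lia.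
rewrite -(ger0_norm Y0) E2.
apply: le_trans (ler_norm_sum _ _ _) _; apply: ler_sum => c _.
have [[K1 hK1] [_ [trA _]]] := proj_hyps (pc j c) VV.
have [_ [[K2 hK2] [_ trB]]] := proj_hyps (pc' j c) VV.
apply: core hK1 hK2 (tens_contr hK) _ _.
  by rewrite trA ler_nat; exact: card_pc_le.
rewrite trB ler_nat; apply: (leq_trans (@card_pc'_le d j c)); exact: card_pc_le.
Qed.
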